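(* Let $w\in W$ and $\alpha\in\Phi^+\cap w\Phi^-$. Then $\ell(\sigma_\alpha w)=\ell(w)-1$ if and only if there do not exist $\beta,\delta\in\Phi^+\cap w\Phi^-$ with $\alpha=\beta+\delta$. Similarly, for $\alpha\in\Phi^+\cap w\Phi^+$, $\ell(\sigma_\alpha w)=\ell(w)+1$ if and only if there do not exist $\beta,\delta\in\Phi^+\cap w\Phi^+$ with $\alpha=\beta+\delta$.
   Context: $\Phi$ is a simply laced (reduced, irreducible ADE) root system with positive roots $\Phi^+$, $\Phi^-=-\Phi^+$, Weyl group $W$, length function $\ell$, and $\sigma_\alpha$ the reflection in $\alpha$. *)

(* Defs.v *)
From HB Require Import structures.
From mathcomp Require Import all_boot all_order all_algebra.
Set Implicit Arguments. Unset Strict Implicit. Unset Printing Implicit Defensive.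
Import Order.TTheory GRing.Theory Num.Theory.
Local Open Scope ring_scope.

Section RootSystems.
Variables (R : realFieldType) (n : nat).
Implicit Types (a b : 'cV[R]_n) (Phi Delta : seq 'cV[R]_n) (w : 'M[R]_n).

Definition dot a b : R := (a^T *m b) 0 0.

(* matrix of the reflection sigma_a : v |-> v - 2 (v,a)/(a,a) a *)
Definition refl a : 'M[R]_n := 1%:M - (2 / dot a a) *: (a *m a^T).

Definition root_system Phi : Prop :=
  [/\ [/\ uniq Phi, 0 \notin Phi & (span Phi = fullv)%VS],
      (forall a b, a \in Phi -> b \in Phi -> refl a *m b \in Phi),
      (forall a b, a \in Phi -> b \in Phi ->
          exists z : int, 2 * dot b a / dot a a = z%:~R) &
      (forall a (c : R), a \in Phi -> c *: a \in Phi -> c = 1 \/ c = -1)].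

Definition irreducible_rs Phi : Prop :=
  forall P : pred 'cV[R]_n,
    (forall a b, a \in Phi -> b \in Phi -> P a -> ~~ P b -> dot a b = 0) ->
    all P Phi \/ all (predC P) Phi.

Definition simply_laced Phi : Prop :=
  forall a b, a \in Phi -> b \in Phi -> dot a a = dot b b.

Definition ADE_root_system Phi : Prop :=
  [/\ root_system Phi, irreducible_rs Phi & simply_laced Phi].

Definition nonneg_comb Delta a : Prop :=
  exists c : 'I_(size Delta) -> nat, a = \sum_(i < size Delta) (c i)%:R *: Delta`_i.

Definition is_base Phi Delta : Prop :=
  [/\ free Delta, all (mem Phi) Delta &
      forall a, a \in Phi -> nonneg_comb Delta a \/ nonneg_comb Delta (- a)].

Definition pos_root Phi Delta a : Prop := a \in Phi /\ nonneg_comb Delta a.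
Definition neg_root Phi Delta a : Prop := a \in Phi /\ nonneg_comb Delta (- a).

Inductive in_Weyl Phi : 'M[R]_n -> Prop :=
  | Weyl1 : in_Weyl Phi 1%:M
  | WeylS a w : a \in Phi -> in_Weyl Phi w -> in_Weyl Phi (refl a *m w).

Definition word_prod Delta (s : seq 'I_(size Delta)) : 'M[R]_n :=
  foldr (fun (i : 'I_(size Delta)) (M : 'M[R]_n) => refl Delta`_i *m M) 1%:M s.

Definition has_word_of_size Delta w (k : nat) : bool :=
  [exists t : k.-tuple 'I_(size Delta), word_prod (tval t) == w].

Definition is_length Delta w (k : nat) : bool :=
  has_word_of_size Delta w k && [forall j : 'I_k, ~~ has_word_of_size Delta w j].

Definition inv_neg Phi Delta w b : Prop :=
  pos_root Phi Delta b /\ exists g, neg_root Phi Delta g /\ b = w *m g.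
Definition inv_pos Phi Delta w b : Prop :=
  pos_root Phi Delta b /\ exists g, pos_root Phi Delta g /\ b = w *m g.

End RootSystems.

(* Main.v *)
Require Import Defs.
From HB Require Import structures.
From mathcomp Require Import all_boot all_order all_algebra.
From Stdlib Require Import ClassicalEpsilon.
From mathcomp Require Import ring lra zify.
Set Implicit Arguments. Unset Strict Implicit. Unset Printing Implicit Defensive.
Import Order.TTheory GRing.Theory Num.Theory.
Local Open Scope ring_scope.

Section Basics.
Variables (R : realFieldType) (n : nat).
Implicit Types (a b c : 'cV[R]_n).

Lemma dotE a b : dot a b = \sum_i a i 0 * b i 0.
Proof. by rewrite /dot !mxE; apply: eq_bigr => i _; rewrite !mxE. Qed.

Lemma dotC a b : dot a b = dot b a.
Proof. by rewrite !dotE; apply: eq_bigr => i _; rewrite mulrC. Qed.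

Lemma dotDr a b c : dot a (b + c) = dot a b + dot a c.
Proof. by rewrite !dotE -big_split; apply: eq_bigr => i _; rewrite !mxE mulrDr. Qed.

Lemma dotZr a b (k : R) : dot a (k *: b) = k * dot a b.
Proof. by rewrite !dotE mulr_sumr; apply: eq_bigr => i _; rewrite !mxE mulrCA. Qed.

Lemma dotNr a b : dot a (- b) = - dot a b.
Proof. by rewrite -scaleN1r dotZr mulN1r. Qed.

Lemma dotBr a b c : dot a (b - c) = dot a b - dot a c.
Proof. by rewrite dotDr dotNr. Qed.

Lemma dotDl a b c : dot (b + c) a = dot b a + dot c a.
Proof. by rewrite dotC dotDr !(dotC a). Qed.
Lemma dotZl a b (k : R) : dot (k *: b) a = k * dot b a.
Proof. by rewrite dotC dotZr dotC. Qed.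
Lemma dotNl a b : dot (- b) a = - dot b a.
Proof. by rewrite dotC dotNr dotC. Qed.
Lemma dotBl a b c : dot (b - c) a = dot b a - dot c a.
Proof. by rewrite dotDl dotNl. Qed.

Lemma dot_ge0 a : 0 <= dot a a.
Proof. by rewrite dotE sumr_ge0 // => i _; rewrite -expr2 sqr_ge0. Qed.

Lemma dot_eq0 a : (dot a a == 0) = (a == 0).
Proof.
apply/idP/eqP => [|->]; last by rewrite dotE big1 // => i _; rewrite mxE mul0r.
rewrite dotE psumr_eq0 => [H|i _]; last by rewrite -expr2 sqr_ge0.
apply/matrixP => i j; rewrite ord1 mxE.
have /allP /(_ i) := H; rewrite mem_index_enum => /(_ isT) /=.
by rewrite mulf_eq0 orbb => /eqP.
Qed.

Lemma dot_gt0 a : a != 0 -> 0 < dot a a.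
Proof. by move=> H; rewrite lt_def dot_eq0 H dot_ge0. Qed.

Lemma reflE a b : refl a *m b = b - (2 * dot a b / dot a a) *: a.
Proof.
rewrite /refl mulmxBl mul1mx -scalemxAl -mulmxA.
rewrite [a^T *m b]mx11_scalar mul_mx_scalar scalerA.
by congr (_ - _ *: _); rewrite /dot mulrAC.
Qed.

Lemma refl_self a : a != 0 -> refl a *m a = - a.
Proof.
move=> H; rewrite reflE mulfK ?dot_eq0 // scaler_nat.
by rewrite mulr2n opprD addrA subrr add0r.
Qed.

Lemma reflK a b : a != 0 -> refl a *m (refl a *m b) = b.
Proof.
move=> H; rewrite !(reflE a) dotBr dotZr.
have d0 : dot a a != 0 by rewrite dot_eq0.
set d := dot a a; set e := dot a b.
have -> : 2 * (e - 2 * e / d * d) / d = - (2 * e / d) by field.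
by rewrite scaleNr opprK subrK.
Qed.

Lemma refl_dot a b c : a != 0 -> dot (refl a *m b) (refl a *m c) = dot b c.
Proof.
move=> H; rewrite !reflE dotBl !dotBr !dotZl !dotZr.
have d0 : dot a a != 0 by rewrite dot_eq0.
rewrite ?(dotC c a) ?(dotC b a); set d := dot a a; set e := dot a b; set f := dot a c.
by field.
Qed.

Lemma refl_lin a b c (k : R) : refl a *m (b + k *: c) = refl a *m b + k *: (refl a *m c).
Proof. by rewrite mulmxDr scalemxAr. Qed.

Lemma mx_ext (A B : 'M[R]_n) : (forall b : 'cV[R]_n, A *m b = B *m b) -> A = B.
Proof.
move=> H; apply/matrixP => i j.
have := H (delta_mx j 0); rewrite -!colE => /matrixP /(_ i 0).
by rewrite !mxE.
Qed.

Lemma refl_conj (p : 'M[R]_n) a (x : 'cV[R]_n) :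
  (forall y z : 'cV[R]_n, dot (p *m y) (p *m z) = dot y z) -> a != 0 ->
  refl (p *m a) *m (p *m x) = p *m (refl a *m x).
Proof.
move=> Hp Ha; rewrite !reflE !Hp mulmxBr scalemxAr //.
Qed.

End Basics.

Definition b2 (P : Prop) : bool :=
  if excluded_middle_informative P then true else false.
Lemma b2P (P : Prop) : reflect P (b2 P).
Proof. by rewrite /b2; case: excluded_middle_informative => H; constructor. Qed.

Section Abstract.
Variables (T : finType) (g : T -> T) (Q : {set T}) (S : pred T).
Hypothesis gK : involutive g.
Hypothesis gQ : forall x, x \in Q -> g x \in Q.
Hypothesis Hns : forall x, x \in Q -> ~~ (S x && S (g x)).

Lemma pair_le : (#|[set x in Q | S x]| <= #|[set x in Q | ~~ S x]|)%N.
Proof.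
rewrite -(card_imset _ (can_inj gK)); apply: subset_leq_card.
apply/subsetP => y /imsetP [x]; rewrite !inE => /andP [xQ Sx] ->.
rewrite gQ //=; apply: contra (Hns xQ) => Sgx; by rewrite Sx.
Qed.

Lemma pair_eq : #|[set x in Q | S x]| = #|[set x in Q | ~~ S x]| <->
  ~ exists x, [&& x \in Q, ~~ S x & ~~ S (g x)].
Proof.
split.
  move=> E [x0 /and3P [x0Q nS0 nSg0]].
  have : (#|[set x in Q | S x]| <= #|[set x in Q | ~~ S x] :\ x0|)%N.
    rewrite -(card_imset _ (can_inj gK)); apply: subset_leq_card.
    apply/subsetP => y /imsetP [x]; rewrite !inE => /andP [xQ Sx] ->.
    rewrite gQ //= andbC; apply/andP; split.
      by apply: contra (Hns xQ) => Sgx; rewrite Sx.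
    by apply/eqP => E0; move: nSg0; rewrite -E0 gK Sx.
  have := cardsD1 x0 [set x in Q | ~~ S x].
  rewrite [x0 \in _]inE x0Q nS0 /= => H; rewrite E; lia.
move=> Hno; apply/eqP; rewrite eqn_leq pair_le /=.
rewrite -(card_imset _ (can_inj gK)); apply: subset_leq_card.
apply/subsetP => y /imsetP [x]; rewrite !inE => /andP [xQ Sx] ->.
rewrite gQ //=; apply/negPn/negP => nSg; apply: Hno; exists x.
by rewrite xQ Sx nSg.
Qed.
End Abstract.

Section Base.
Variables (R : realFieldType) (n : nat) (Phi Delta : seq 'cV[R]_n).
Hypothesis HPhi : root_system Phi.
Hypothesis HDelta : is_base Phi Delta.

Local Notation s := (size Delta).
Definition comb (x : 'I_s -> R) : 'cV[R]_n := \sum_(i < s) x i *: Delta`_i.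

Lemma comb_ext x y : (forall i, x i = y i) -> comb x = comb y.
Proof. by move=> H; rewrite /comb; apply: eq_bigr => i _; rewrite H. Qed.

Lemma combB x y : comb x - comb y = comb (fun i => x i - y i).
Proof. by rewrite /comb -sumrB; apply: eq_bigr => i _; rewrite scalerBl. Qed.
Lemma combD x y : comb x + comb y = comb (fun i => x i + y i).
Proof. by rewrite /comb -big_split; apply: eq_bigr => i _; rewrite scalerDl. Qed.
Lemma combN x : - comb x = comb (fun i => - x i).
Proof. by rewrite /comb -sumrN; apply: eq_bigr => i _; rewrite scaleNr. Qed.
Lemma combZ (k : R) x : k *: comb x = comb (fun i => k * x i).
Proof. by rewrite /comb scaler_sumr; apply: eq_bigr => i _; rewrite scalerA. Qed.
Lemma comb0 : comb (fun _ => 0) = 0.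
Proof. by rewrite /comb big1 // => i _; rewrite scale0r. Qed.

Lemma comb_delta (j : 'I_s) : Delta`_j = comb (fun i => (i == j)%:R).
Proof.
rewrite /comb (bigD1 j) //= eqxx scale1r big1 ?addr0 // => i /negbTE ->.
by rewrite scale0r.
Qed.

Lemma comb_inj x y : comb x = comb y -> forall i, x i = y i.
Proof.
move=> H i; apply/eqP; rewrite -subr_eq0; apply/eqP; move: i.
case: HDelta => Hfree _ _.
move: Hfree => /(@freeP _ _ _ (in_tuple Delta)) Hf; apply: (Hf (fun i => x i - y i)).
by move: (combB x y); rewrite H subrr /comb => <-.
Qed.

Lemma Phi_neq0 a : a \in Phi -> a != 0.
Proof. by case: HPhi => -[_ H0 _] _ _ _ Ha; apply: contraNneq H0 => <-. Qed.

Lemma Phi_refl a b : a \in Phi -> b \in Phi -> refl a *m b \in Phi.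
Proof. by case: HPhi => _ H _ _; apply: H. Qed.

Lemma Phi_N a : a \in Phi -> - a \in Phi.
Proof. by move=> Ha; rewrite -refl_self ?Phi_neq0 // Phi_refl. Qed.

Lemma Phi_int a b : a \in Phi -> b \in Phi -> exists z : int, 2 * dot b a / dot a a = z%:~R.
Proof. by case: HPhi => _ _ H _; apply: H. Qed.

Lemma Phi_red a (c : R) : a \in Phi -> c *: a \in Phi -> c = 1 \/ c = -1.
Proof. by case: HPhi => _ _ _ H; apply: H. Qed.

Local Notation pos := (pos_root Phi Delta).
Local Notation neg := (neg_root Phi Delta).

Lemma pos_or_neg a : a \in Phi -> pos a \/ neg a.
Proof. by case: HDelta => _ _ H Ha; case: (H a Ha) => ?; [left|right]. Qed.

Lemma natcomb_eq0 (c : 'I_s -> nat) : comb (fun i => (c i)%:R) = 0 -> forall i, c i = 0%N.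
Proof.
move=> H i; rewrite -comb0 in H; have := comb_inj H i.
by move/eqP; rewrite pnatr_eq0 => /eqP.
Qed.

Lemma pos_neg a : pos a -> neg a -> False.
Proof.
move=> [Ha [c Hc]] [_ [d Hd]].
have : comb (fun i => (c i + d i)%:R) = 0.
  rewrite (comb_ext (y := fun i => (c i)%:R + (d i)%:R)) => [|i]; last exact: natrD.
  by rewrite -combD /comb -Hc -Hd subrr.
move=> /natcomb_eq0 H0.
have : a = 0.
  rewrite -comb0 (_ : a = comb (fun i => (c i)%:R)) //; apply: comb_ext => i.
  by have := H0 i; case: (c i).
by move=> a0; move: (Phi_neq0 Ha); rewrite a0 eqxx.
Qed.

Lemma neg_posN a : neg a <-> pos (- a).
Proof.
split=> [[Ha H]|[Ha H]]; split => //; first exact: Phi_N.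
by rewrite -[a]opprK Phi_N.
Qed.

Lemma pos_negN a : pos a <-> neg (- a).
Proof. by rewrite neg_posN opprK. Qed.

Lemma natcombD a b : nonneg_comb Delta a -> nonneg_comb Delta b -> nonneg_comb Delta (a + b).
Proof.
move=> [c ->] [d ->]; exists (fun i => (c i + d i)%N).
by rewrite [_ + _]combD; apply: comb_ext => i; rewrite natrD.
Qed.

Lemma Delta_Phi (j : 'I_s) : Delta`_j \in Phi.
Proof. by case: HDelta => _ /allP H _; apply: H; rewrite mem_nth. Qed.

Lemma pos_Delta (j : 'I_s) : pos Delta`_j.
Proof.
split; first exact: Delta_Phi.
by exists (fun i => nat_of_bool (i == j)); rewrite [LHS]comb_delta.
Qed.

Lemma simple_pos (j : 'I_s) b : pos b -> b != Delta`_j -> pos (refl Delta`_j *m b).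
Proof.
move=> [Hb [c Hc]] Hbj.
have Hr : refl Delta`_j *m b \in Phi by rewrite Phi_refl ?Delta_Phi.
case: (pos_or_neg Hr) => // -[_ [d Hd]]; exfalso.
set m := 2 * dot Delta`_j b / dot Delta`_j Delta`_j.
have E : comb (fun i => (c i)%:R - m * (i == j)%:R + (d i)%:R) = 0.
  rewrite -combD -combB -combZ -comb_delta -[comb (fun i => (c i)%:R)]Hc.
  by rewrite -[comb (fun i => (d i)%:R)]Hd -reflE subrr.
have Hk k : k != j -> c k = 0%N.
  move=> Hkj; have := comb_inj (etrans E (esym comb0)) k.
  rewrite (negbTE Hkj) mulr0 subr0 -natrD => /eqP; rewrite pnatr_eq0 addn_eq0.
  by case/andP => /eqP.
have Eb : b = (c j)%:R *: Delta`_j.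
  rewrite Hc /comb (bigD1 j) //= big1 ?addr0 // => i /Hk ->.
  by rewrite scale0r.
have := @Phi_red Delta`_j (c j)%:R (Delta_Phi j); rewrite -Eb => /(_ Hb) [H1|H1].
  by move: Hbj; rewrite Eb H1 scale1r eqxx.
by move: (ler0n R (c j)); rewrite H1; lra.
Qed.


Local Notation word := (@word_prod R n Delta).

Lemma word_cons i t : word (i :: t) = refl Delta`_i *m word t.
Proof. by []. Qed.

Lemma word_cat t1 t2 : word (t1 ++ t2) = word t1 *m word t2.
Proof.
elim: t1 => [|i t1 IH]; first by rewrite cat0s (_ : word [::] = 1%:M) // mul1mx.
by rewrite cat_cons !word_cons IH mulmxA.
Qed.

Lemma Delta_neq0 (i : 'I_s) : Delta`_i != 0.
Proof. exact: (Phi_neq0 (Delta_Phi i)). Qed.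

Lemma word_dot t (x y : 'cV[R]_n) : dot (word t *m x) (word t *m y) = dot x y.
Proof.
elim: t x y => [|i t IH] x y /=; first by rewrite !mul1mx.
by rewrite -!mulmxA refl_dot ?Delta_neq0 // IH.
Qed.

Lemma word_Phi t b : b \in Phi -> word t *m b \in Phi.
Proof.
elim: t => [|i t IH] /=; first by rewrite mul1mx.
by move=> Hb; rewrite -mulmxA Phi_refl ?Delta_Phi ?IH.
Qed.

Lemma word_rev t (b : 'cV[R]_n) : word t *m (word (rev t) *m b) = b.
Proof.
elim: t b => [|i t IH] b /=; first by rewrite !mul1mx.
rewrite rev_cons -cats1 word_cat word_cons -!mulmxA IH.
by rewrite (_ : word [::] = 1%:M) // mul1mx reflK ?Delta_neq0.
Qed.

Lemma word_inj t (x y : 'cV[R]_n) : word t *m x = word t *m y -> x = y.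
Proof.
move=> H; apply/eqP; rewrite -subr_eq0 -dot_eq0 -(word_dot t).
by rewrite !mulmxBr H subrr dotE big1 // => i _; rewrite mxE mul0r.
Qed.

Definition J (w : 'M[R]_n) b := exists g, neg g /\ b = w *m g.
Definition K (w : 'M[R]_n) b := exists g, pos g /\ b = w *m g.

Lemma JK_or t b : b \in Phi -> J (word t) b \/ K (word t) b.
Proof.
move=> Hb; have Hg : word (rev t) *m b \in Phi by apply: word_Phi.
by case: (pos_or_neg Hg) => H; [right|left]; exists (word (rev t) *m b); rewrite word_rev.
Qed.

Lemma JK_excl t b : J (word t) b -> K (word t) b -> False.
Proof.
move=> [g [Hg ->]] [h [Hh /word_inj E]].
by apply: (pos_neg Hh); rewrite -E.
Qed.

Lemma J_N (w : 'M[R]_n) b : J w (- b) <-> K w b.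
Proof.
split=> [[g [Hg E]]|[g [Hg E]]].
  exists (- g); split; first by move: Hg; rewrite neg_posN.
  by rewrite mulmxN -E opprK.
exists (- g); split; first by move: Hg; rewrite pos_negN.
by rewrite mulmxN -E.
Qed.

Lemma K_N (w : 'M[R]_n) b : K w (- b) <-> J w b.
Proof. by rewrite -J_N opprK. Qed.

Lemma J_add t b d : J (word t) b -> J (word t) d -> b + d \in Phi -> J (word t) (b + d).
Proof.
move=> [g [[Hg Cg] ->]] [h [[Hh Ch] ->]] Hbd; exists (g + h); split; last by rewrite mulmxDr.
split; last by rewrite opprD; apply: natcombD.
have -> : g + h = word (rev t) *m (word t *m g + word t *m h).
  apply: (word_inj (t := t)); by rewrite word_rev mulmxDr.
exact: word_Phi.
Qed.

Lemma K_add t b d : K (word t) b -> K (word t) d -> b + d \in Phi -> K (word t) (b + d).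
Proof.
move=> [g [[Hg Cg] ->]] [h [[Hh Ch] ->]] Hbd; exists (g + h); split; last by rewrite mulmxDr.
split; last by apply: natcombD.
have -> : g + h = word (rev t) *m (word t *m g + word t *m h).
  apply: (word_inj (t := t)); by rewrite word_rev mulmxDr.
exact: word_Phi.
Qed.

Lemma J_refl a (w : 'M[R]_n) b : a != 0 -> J (refl a *m w) b <-> J w (refl a *m b).
Proof.
move=> Ha; split=> [[g [Hg ->]]|[g [Hg E]]]; exists g; split => //.
  by rewrite -mulmxA reflK.
by rewrite -mulmxA -E reflK.
Qed.


Lemma b2_iff (P Q : Prop) : (P <-> Q) -> b2 P = b2 Q.
Proof. by move=> H; apply/b2P/b2P; apply H. Qed.

Lemma b2_neg y : y \in Phi -> b2 (neg y) = ~~ b2 (pos y).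
Proof.
move=> Hy; case: (pos_or_neg Hy) => H.
  by rewrite (introT (b2P _) H) /=; apply/negbTE/negP => /b2P H'; apply: (pos_neg H H').
by rewrite (introT (b2P _) H); apply/esym/negP => /b2P H'; apply: (pos_neg H' H).
Qed.

Lemma b2_posN y : b2 (pos (- y)) = b2 (neg y).
Proof. by apply: b2_iff; rewrite neg_posN. Qed.
Lemma b2_negN y : b2 (neg (- y)) = b2 (pos y).
Proof. by apply: b2_iff; rewrite pos_negN. Qed.
Lemma b2_JN (w : 'M[R]_n) y : b2 (J w (- y)) = b2 (K w y).
Proof. by apply: b2_iff; rewrite J_N. Qed.
Lemma b2_K t y : y \in Phi -> b2 (K (word t) y) = ~~ b2 (J (word t) y).
Proof.
move=> Hy; case: (JK_or t Hy) => H.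
  by rewrite (introT (b2P _) H) /=; apply/negbTE/negP => /b2P H'; apply: (JK_excl H H').
by rewrite (introT (b2P _) H); apply/esym/negP => /b2P H'; apply: (JK_excl H' H).
Qed.

Local Notation T := (seq_sub Phi).
Definition tmap (f : 'cV[R]_n -> 'cV[R]_n) (Hf : forall x, x \in Phi -> f x \in Phi) (x : T) : T :=
  SeqSub (Hf _ (ssvalP x)).
Definition negT : T -> T := @tmap (fun x => - x) Phi_N.
Definition reflT a (Ha : a \in Phi) : T -> T :=
  @tmap (fun x => refl a *m x) (fun x Hx => Phi_refl Ha Hx).

Lemma negTE x : val (negT x) = - val x. Proof. by []. Qed.
Lemma reflTE a (Ha : a \in Phi) x : val (reflT Ha x) = refl a *m val x. Proof. by []. Qed.

Lemma negTK : involutive negT.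
Proof. by move=> x; apply: val_inj; rewrite !negTE opprK. Qed.
Lemma reflTK a (Ha : a \in Phi) : involutive (reflT Ha).
Proof. by move=> x; apply: val_inj; rewrite !reflTE reflK ?Phi_neq0. Qed.

Definition Nm (w : 'M[R]_n) := #|[set x : T | b2 (pos (val x)) && b2 (J w (val x))]|.

Lemma count_formula a (Ha : a \in Phi) t :
  (Nm (refl a *m word t) +
  #|[set x : T | [&& b2 (pos (val x)), b2 (neg (refl a *m val x)) & b2 (J (word t) (val x))]]|
  = Nm (word t) +
  #|[set x : T | [&& b2 (pos (val x)), b2 (neg (refl a *m val x)) & ~~ b2 (J (word t) (val x))]]|)%N.
Proof.
set w := word t; set tau := reflT Ha.
have a0 : a != 0 := Phi_neq0 Ha.
pose P (x : T) := b2 (pos (val x)); pose Jb (x : T) := b2 (J w (val x)).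
pose A := [set x | P (tau x) && Jb x]; pose B := [set x | P x && Jb x].
have E1 : [set x : T | b2 (pos (val x)) && b2 (J (refl a *m w) (val x))] = tau @^-1: A.
  apply/setP => x; rewrite !inE /P /Jb /tau reflTK reflTE.
  by congr (_ && _); apply: b2_iff; apply: J_refl.
have E2 : B :\: A = [set x : T | [&& b2 (pos (val x)), b2 (neg (refl a *m val x)) & b2 (J w (val x))]].
  apply/setP => x; rewrite !inE /P /Jb /tau -(reflTE Ha) b2_neg ?ssvalP //.
  by case: (b2 (pos _)); case: (b2 (pos (val x))); case: (b2 (J _ _)).
have E3 : A :\: B = negT @^-1: [set x : T | [&& b2 (pos (val x)), b2 (neg (refl a *m val x)) & ~~ b2 (J w (val x))]].
  apply/setP => x; rewrite !inE /P /Jb negTE b2_posN mulmxN b2_negN b2_JN b2_K ?ssvalP //.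
  rewrite -(reflTE Ha) b2_neg ?ssvalP // /tau.
  rewrite negbK -/w. by case: (b2 (pos (val x))); case: (b2 (pos (val (reflT Ha x)))); case: (b2 (J w (val x))).
rewrite /Nm E1 card_preimset; last exact: (can_inj (reflTK Ha)).
have C3 : #|A :\: B| = #|[set x : T | [&& b2 (pos (val x)), b2 (neg (refl a *m val x)) & ~~ b2 (J w (val x))]]|.
  by rewrite E3 card_preimset //; exact: (can_inj negTK).
rewrite -E2 -C3.
rewrite -(cardsID B A) -(cardsID A B) setIC.
by rewrite /B addnAC.
Qed.

Definition DT (i : 'I_s) : T := SeqSub (Delta_Phi i).

Lemma X_simple (i : 'I_s) (c : pred T) :
  [set x : T | [&& b2 (pos (val x)), b2 (neg (refl Delta`_i *m val x)) & c x]] =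
  [set x | (x == DT i) && c x].
Proof.
apply/setP => x; rewrite !inE.
have -> : (x == DT i) = (val x == Delta`_i) by [].
have Hx := ssvalP x.
case: eqP => [E|NE].
  rewrite E refl_self ?Delta_neq0 // b2_negN.
  by rewrite (introT (b2P _) (pos_Delta i)).
case: (boolP (b2 (pos (val x)))) => //= /b2P Hp.
rewrite b2_neg; last by rewrite Phi_refl ?Delta_Phi.
rewrite (introT (b2P _) (simple_pos Hp _)) //; exact/eqP.
Qed.

Lemma card_X (y : T) (c : pred T) : #|[set x | (x == y) && c x]| = c y.
Proof.
case E: (c y).
  rewrite (_ : [set x | _] = [set y]) ?cards1 //.
  by apply/setP => x; rewrite !inE; case: eqP => // ->; rewrite E.
rewrite (_ : [set x | _] = set0) ?cards0 //.
by apply/setP => x; rewrite !inE; case: eqP => // ->; rewrite E.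
Qed.

Lemma simple_formula (i : 'I_s) t :
  (Nm (refl Delta`_i *m word t) + b2 (J (word t) Delta`_i) =
   Nm (word t) + ~~ b2 (J (word t) Delta`_i))%N.
Proof.
have := count_formula (Delta_Phi i) t.
by rewrite !X_simple !card_X.
Qed.

Lemma Nm1 : Nm 1%:M = 0%N.
Proof.
rewrite /Nm (_ : [set x | _] = set0) ?cards0 //.
apply/setP => x; rewrite !inE; apply/negbTE/negP => /andP [/b2P Hp /b2P [g [Hg E]]].
by move: E Hp; rewrite mul1mx => ->; move/pos_neg; apply.
Qed.

Lemma word0 : word [::] = 1%:M. Proof. by []. Qed.

Lemma Nm_word t : (Nm (word t) <= size t)%N.
Proof.
elim: t => [|i t IH]; first by rewrite word0 Nm1.
have := simple_formula i t; rewrite word_cons /=.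
case: (b2 (J _ _)) => /=; lia.
Qed.

Lemma reflKm (a : 'cV[R]_n) (M : 'M[R]_n) : a != 0 -> refl a *m (refl a *m M) = M.
Proof. by move=> Ha; apply: mx_ext => b; rewrite -!mulmxA reflK. Qed.

Lemma refl_conjm (u v : 'cV[R]_n) : u != 0 -> v != 0 ->
  refl (refl u *m v) = refl u *m refl v *m refl u.
Proof.
move=> Hu Hv; apply: mx_ext => x.
rewrite -[in LHS](reflK x Hu) refl_conj //; last by move=> y z; rewrite refl_dot.
by rewrite -!mulmxA.
Qed.

Lemma exchange t (g : 'cV[R]_n) : pos g -> J (word t) g ->
  exists t', (size t' < size t)%N /\ word t' = refl g *m word t.
Proof.
elim: t g => [|i t IH] g Hg.
  by rewrite word0 => -[h [Hh E]]; move: E Hg; rewrite mul1mx => -> Hg; case: (pos_neg Hg Hh).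
rewrite word_cons => /(J_refl _ _ (Delta_neq0 i)) HJ.
case: (eqVneq g Delta`_i) => [->|Hgi].
  by exists t; split => //; rewrite reflKm ?Delta_neq0.
have Hg' := simple_pos Hg Hgi.
have [t'' [Hs Ew]] := IH _ Hg' HJ.
exists (i :: t''); split; first by [].
rewrite word_cons Ew refl_conjm ?Delta_neq0 ?(Phi_neq0 (proj1 Hg)) //.
by rewrite -!mulmxA reflKm ?Delta_neq0.
Qed.

Lemma Nm_min t : (forall t', word t' = word t -> (size t <= size t')%N) ->
  Nm (word t) = size t.
Proof.
elim: t => [|i t IH] Hmin; first by rewrite word0 Nm1.
have Hmin' : forall t', word t' = word t -> (size t <= size t')%N.
  by move=> t' E; have := Hmin (i :: t'); rewrite !word_cons E /= ltnS; apply.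
have NJ : ~~ b2 (J (word t) Delta`_i).
  apply/negP => /b2P HJ; have [t' [Hs E]] := exchange (pos_Delta i) HJ.
  by have := Hmin t'; rewrite E word_cons => /(_ erefl) /=; lia.
have := simple_formula i t; rewrite (negbTE NJ) IH // word_cons /=; lia.
Qed.

Lemma has_wordP (w : 'M[R]_n) k :
  reflect (exists t, size t = k /\ word t = w) (has_word_of_size Delta w k).
Proof.
apply: (iffP existsP) => [[tp /eqP E]|[t [Hs E]]].
  by exists (tval tp); rewrite size_tuple.
have Hs' : size t == k by rewrite Hs.
by exists (Tuple Hs'); rewrite /= E.
Qed.

Lemma lengthP t0 k : is_length Delta (word t0) k <-> k = Nm (word t0).
Proof.
split.
  case/andP => /has_wordP [t [Hs E]] /forallP Hno.
  rewrite -E Nm_min ?Hs // => t' E'; rewrite ?Hs leqNgt; apply/negP => Hlt.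
  by have := Hno (Ordinal Hlt); rewrite /= => /negP; apply; apply/has_wordP; exists t'; rewrite E'.
have exP : exists m, has_word_of_size Delta (word t0) m.
  by exists (size t0); apply/has_wordP; exists t0.
case: (ex_minnP exP) => m /has_wordP [t [Hs E]] Hm ->.
have Nmt : Nm (word t0) = m.
  rewrite -E Nm_min ?Hs // => t' E'; apply: Hm; apply/has_wordP; exists t'; by rewrite E' E.
rewrite /is_length Nmt; apply/andP; split; first by apply/has_wordP; exists t.
apply/forallP => j; apply/negP => Hj; have := Hm _ Hj.
by rewrite leqNgt ltn_ord.
Qed.

Lemma dot0r (a : 'cV[R]_n) : dot a 0 = 0.
Proof. by rewrite dotE big1 // => i _; rewrite mxE mulr0. Qed.

Lemma dot_comb (a : 'cV[R]_n) x : dot a (comb x) = \sum_i x i * dot a Delta`_i.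
Proof.
rewrite /comb (big_morph (dot a) (dotDr a) (dot0r a)).
by apply: eq_bigr => i _; rewrite dotZr.
Qed.

Lemma reflN (a : 'cV[R]_n) : refl (- a) = refl a.
Proof.
apply: mx_ext => b; rewrite !reflE !dotNl !dotNr opprK.
by rewrite mulrN mulNr scaleNr scalerN opprK.
Qed.

Lemma refl_word_pos h : forall g (c : 'I_s -> nat), g \in Phi ->
  g = comb (fun i => (c i)%:R) -> (\sum_i c i <= h)%N -> exists t, refl g = word t.
Proof.
elim: h => [|h IH] g c Hg Ec Hh.
  have c0 : forall i, c i = 0%N.
    by move=> i; move: Hh; rewrite (bigD1 i) //= leqn0 addn_eq0 => /andP [/eqP].
  have : g = 0 by rewrite Ec -comb0; apply: comb_ext => i; rewrite c0.
  by move=> g0; move: (Phi_neq0 Hg); rewrite g0 eqxx.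
have Hdg : dot g g = \sum_i (c i)%:R * dot g Delta`_i by rewrite {2}Ec dot_comb.
have [j Hj] : exists j, 0 < (c j)%:R * dot g Delta`_j.
  case: (boolP [exists j, 0 < (c j)%:R * dot g Delta`_j]) => [/existsP //|].
  rewrite negb_exists => /forallP H.
  have : dot g g <= 0 by rewrite Hdg; apply: sumr_le0 => i _; rewrite leNgt H.
  by rewrite leNgt dot_gt0 ?Phi_neq0.
have Hd : 0 < dot g Delta`_j.
  rewrite ltNge; apply/negP => Hle; move: Hj; rewrite ltNge mulr_ge0_le0 ?ler0n //.
case: (eqVneq g Delta`_j) => [->|Hgj].
  by exists [:: j]; rewrite word_cons word0 mulmx1.
have Hpg : pos g by split => //; exists c.
have [Hg'Phi [d Ed]] := simple_pos Hpg Hgj.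
have [z Hz] := Phi_int (Delta_Phi j) Hg.
have Ed' : comb (fun i => (d i)%:R) = comb (fun i => (c i)%:R - z%:~R * (i == j)%:R).
  have -> : comb (fun i => (d i)%:R) = refl Delta`_j *m g by rewrite Ed.
  by rewrite reflE dotC Hz -combB -combZ -comb_delta -Ec.
have Ci := comb_inj Ed'.
have Hsum : \sum_i (d i)%:R = \sum_i (c i)%:R - z%:~R :> R.
  rewrite (eq_bigr _ (fun i _ => Ci i)) sumrB; congr (_ - _).
  rewrite (bigD1 j) //= eqxx mulr1 big1 ?addr0 // => i /negbTE ->; by rewrite mulr0.
have zpos : (0 : R) < z%:~R by rewrite -Hz divr_gt0 ?mulr_gt0 ?dot_gt0 ?Delta_neq0.
have Hz1 : (1 : R) <= z%:~R by rewrite ler1z; move: zpos; rewrite ltr0z; lia.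
have Hlt : (\sum_i d i < \sum_i c i)%N.
  by rewrite -(ltr_nat R) !natr_sum Hsum; lra.
have HdH : (\sum_i d i <= h)%N by rewrite -ltnS (leq_trans Hlt Hh).
have [t Et] := IH _ d Hg'Phi Ed HdH.
exists (j :: t ++ [:: j]).
rewrite word_cons word_cat word_cons word0 mulmx1 -Et.
apply: mx_ext => x; rewrite refl_conjm ?Delta_neq0 ?Phi_neq0 // -!mulmxA !reflK ?Delta_neq0 //.
Qed.

Lemma refl_word (a : 'cV[R]_n) : a \in Phi -> exists t, refl a = word t.
Proof.
move=> Ha; case: (pos_or_neg Ha) => [[_ [c Ec]]|[_ [c Ec]]].
  exact: (@refl_word_pos _ a c Ha Ec (leqnn _)).
rewrite -reflN; exact: (@refl_word_pos _ (- a) c (Phi_N Ha) Ec (leqnn _)).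
Qed.

Lemma Weyl_word (w : 'M[R]_n) : in_Weyl Phi w -> exists t, w = word t.
Proof.
elim => [|a w' Ha _ [t Et]]; first by exists [::].
have [t' Et'] := refl_word Ha.
by exists (t' ++ t); rewrite word_cat Et' Et.
Qed.

Hypothesis Hsl : simply_laced Phi.

Lemma pairing (a b : 'cV[R]_n) : a \in Phi -> b \in Phi -> b != a -> b != - a ->
  exists z : int, [/\ (z == 0) || (z == 1) || (z == -1),
     2 * dot b a / dot a a = z%:~R & refl a *m b = b - z%:~R *: a].
Proof.
move=> Ha Hb Hba HbN.
have [z Hz] := Phi_int Ha Hb.
exists z; split => //; last by rewrite reflE dotC Hz.
have HL := dot_gt0 (Phi_neq0 Ha).
have EL := Hsl Ha Hb.
have h1 : 0 < dot (b - a) (b - a) by apply: dot_gt0; rewrite subr_eq0.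
have h2 : 0 < dot (b + a) (b + a) by apply: dot_gt0; rewrite addr_eq0.
rewrite !dotBl !dotBr !dotDl !dotDr (dotC a b) -EL in h1 h2.
have Hz' : z%:~R * dot a a = 2 * dot b a by rewrite -Hz mulfVK ?dot_eq0 ?Phi_neq0.
have a1 : (z%:~R : R) < 2 by nra.
have a2 : (-2 : R) < z%:~R by nra.
have b1 : (z < 2)%R by rewrite -(ltr_int R).
have b2 : (-2 < z)%R by rewrite -(ltr_int R).
apply/orP; lia.
Qed.

Section Alpha.
Variables (a : 'cV[R]_n) (Ha : a \in Phi) (Hpa : pos a).

Definition aT : T := SeqSub Ha.
Definition gT (x : T) : T := negT (reflT Ha x).
Definition QS := [set x : T | [&& x != aT, b2 (pos (val x)) & b2 (neg (refl a *m val x))]].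

Lemma gTE x : val (gT x) = - (refl a *m val x). Proof. by []. Qed.

Lemma gTK : involutive gT.
Proof. by move=> x; apply: val_inj; rewrite !gTE mulmxN reflK ?opprK ?Phi_neq0. Qed.

Lemma neqNa b : pos b -> b != - a.
Proof. by move=> Hb; apply/eqP => E; move: Hb; rewrite E -neg_posN => /(pos_neg Hpa). Qed.

Lemma Q_refl x : x \in QS -> refl a *m val x = val x - a.
Proof.
rewrite inE => /and3P [xa /b2P Hp /b2P Hn].
have xa' : val x != a by apply: contra xa => /eqP E; apply/eqP/val_inj.
have [z [Hz _ E]] := pairing Ha (ssvalP x) xa' (neqNa Hp).
move: Hn; rewrite E; case/orP: Hz => [/orP [] /eqP ->|/eqP ->].
- by rewrite scale0r subr0 => /(pos_neg Hp).
- by rewrite scale1r.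
move=> Hn; exfalso; apply: (pos_neg _ Hn); split; first by move: Hn => [].
rewrite (_ : (-1)%:~R = -1 :> R) // scaleN1r opprK; case: Hp => _ Hp; case: Hpa => _ Ha'; exact: natcombD.
Qed.

Lemma Q_sum x : x \in QS -> val x + val (gT x) = a.
Proof. by move=> Hx; rewrite gTE Q_refl // opprB addrC subrK. Qed.

Lemma Q_g x : x \in QS -> gT x \in QS.
Proof.
move=> Hx; have := Hx; rewrite !inE => /and3P [xa Hp Hn].
rewrite gTE mulmxN reflK ?Phi_neq0 // b2_negN b2_posN Hp Hn /= andbT.
apply/eqP => E; have := Q_sum Hx; rewrite E /= => /(canRL (addrK a)); rewrite subrr.
by move=> x0; move: (Phi_neq0 (ssvalP x)); rewrite x0 eqxx.
Qed.

Lemma card_S (c : pred T) :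
  #|[set x : T | [&& b2 (pos (val x)), b2 (neg (refl a *m val x)) & c x]]| =
  (c aT + #|[set x in QS | c x]|)%N.
Proof.
rewrite (cardsD1 aT) inE /= refl_self ?Phi_neq0 // b2_negN.
rewrite (introT (b2P _) Hpa) /=; congr (_ + _)%N; apply: eq_card => x.
by rewrite !inE -!andbA.
Qed.

Lemma decompP (C : 'cV[R]_n -> Prop) :
  (exists b d, [/\ pos b /\ C b, pos d /\ C d & a = b + d]) <->
  exists x, [&& x \in QS, b2 (C (val x)) & b2 (C (val (gT x)))].
Proof.
split.
  move=> [b [d [[Hb Cb] [Hd Cd] Eab]]].
  have nbd (u v : 'cV[R]_n) : v \in Phi -> a = u + v -> u != a.
    move=> Hv E; apply/eqP => E'; move: (Phi_neq0 Hv).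
    by move: E; rewrite E' -{1}[a]addr0 => /addrI <-; rewrite eqxx.
  have [zb [Hzb Pb Rb]] := pairing Ha (proj1 Hb) (nbd _ _ (proj1 Hd) Eab) (neqNa Hb).
  have [zd [Hzd Pd Rd]] := pairing Ha (proj1 Hd) (nbd d b (proj1 Hb) (etrans Eab (addrC b d))) (neqNa Hd).
  have Hsum : (zb + zd)%:~R = (2 : int)%:~R :> R.
    rewrite intrD -Pb -Pd -mulrDl -mulrDr -dotDl -Eab mulfK ?dot_eq0 ?Phi_neq0 //.
  move/eqP: Hsum; rewrite eqr_int => /eqP Hs.
  have zb1 : zb = 1 by case/orP: Hzb => [/orP [] /eqP E|/eqP E]; case/orP: Hzd => [/orP [] /eqP E'|/eqP E']; lia.
  have Rb' : refl a *m b = - d by rewrite Rb zb1 scale1r Eab opprD addNKr.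
  exists (SeqSub (proj1 Hb)); rewrite !inE /=.
  apply/and3P; split; [apply/and3P; split| |].
  - by apply/eqP => /(congr1 val) /= E; move: (nbd _ _ (proj1 Hd) Eab); rewrite E eqxx.
  - exact/b2P.
  - by apply/b2P; rewrite Rb'; apply/pos_negN.
  - exact/b2P.
  - by apply/b2P; rewrite Rb' opprK.
move=> [x /and3P [xQ /b2P Cb /b2P Cd]].
have := xQ; rewrite inE => /and3P [_ /b2P Hp /b2P Hn].
exists (val x), (val (gT x)); split => //; last by rewrite Q_sum.
by split => //; rewrite gTE -neg_posN.
Qed.

End Alpha.

Lemma part1 t a : pos a -> J (word t) a ->
  exists k : nat, is_length Delta (word t) k /\
       (is_length Delta (refl a *m word t) k.-1 <->
        ~ exists beta delta : 'cV[R]_n,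
            [/\ inv_neg Phi Delta (word t) beta, inv_neg Phi Delta (word t) delta &
                a = beta + delta]).
Proof.
move=> Hpa HJa; have Ha := proj1 Hpa.
exists (Nm (word t)); split; first by apply/lengthP.
have [t' Et'] := refl_word Ha.
rewrite Et' -word_cat lengthP word_cat -Et'.
have F := count_formula Ha t; rewrite !(card_S Ha Hpa) /= in F.
rewrite (introT (b2P _) HJa) /= in F.
pose Jb (x : T) := b2 (J (word t) (val x)).
change (Nm (refl a *m word t) + (1 + #|[set x in QS Ha | Jb x]|) =
  Nm (word t) + (0 + #|[set x in QS Ha | ~~ Jb x]|))%N in F.
have Hns : forall x, x \in QS Ha -> ~~ (~~ Jb x && ~~ Jb (gT Ha x)).
  move=> x xQ; apply/negP => /andP []; rewrite /Jb -!b2_K ?ssvalP // => /b2P K1 /b2P K2.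
  have := K_add K1 K2; rewrite (Q_sum Hpa) // => /(_ Ha) KA; exact: (JK_excl HJa KA).
have Hle := pair_le (gTK Ha) (@Q_g _ Ha Hpa) Hns.
have Heq := pair_eq (gTK Ha) (@Q_g _ Ha Hpa) Hns.
have E : [set x in QS Ha | ~~ ~~ Jb x] = [set x in QS Ha | Jb x].
  by apply/setP => x; rewrite !inE negbK.
rewrite E in Hle Heq.
have D := decompP Ha Hpa (J (word t)).
split.
  move=> HN [b [d [Hb Hd Ed]]].
  have HAB : #|[set x in QS Ha | ~~ Jb x]| = #|[set x in QS Ha | Jb x]|.
    move: F Hle; rewrite -HN -?subn1; lia.
  apply: (proj1 Heq HAB); have [x Hx] := proj1 D (ex_intro _ b (ex_intro _ d (And3 Hb Hd Ed))).
  by exists x; rewrite !negbK.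
move=> Hno.
have HAB : #|[set x in QS Ha | ~~ Jb x]| = #|[set x in QS Ha | Jb x]|.
  apply/(proj2 Heq) => -[x Hx]; apply: Hno.
  have [b [d [Hb Hd Ed]]] : exists b d, [/\ pos b /\ J (word t) b, pos d /\ J (word t) d & a = b + d].
    by apply/D; exists x; move: Hx; rewrite !negbK.
  by exists b, d.
move: F HAB Hle; rewrite -?subn1; lia.
Qed.

Lemma part2 t a : pos a -> K (word t) a ->
  exists k : nat, is_length Delta (word t) k /\
       (is_length Delta (refl a *m word t) k.+1 <->
        ~ exists beta delta : 'cV[R]_n,
            [/\ inv_pos Phi Delta (word t) beta, inv_pos Phi Delta (word t) delta &
                a = beta + delta]).
Proof.
move=> Hpa HKa; have Ha := proj1 Hpa.
exists (Nm (word t)); split; first by apply/lengthP.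
have [t' Et'] := refl_word Ha.
rewrite Et' -word_cat lengthP word_cat -Et'.
have F := count_formula Ha t; rewrite !(card_S Ha Hpa) /= in F.
have nJa : b2 (J (word t) a) = false.
  by apply/negbTE; rewrite -b2_K //; apply/b2P.
rewrite nJa /= in F.
pose Jb (x : T) := b2 (J (word t) (val x)).
change (Nm (refl a *m word t) + (0 + #|[set x in QS Ha | Jb x]|) =
  Nm (word t) + (1 + #|[set x in QS Ha | ~~ Jb x]|))%N in F.
have Hns : forall x, x \in QS Ha -> ~~ (Jb x && Jb (gT Ha x)).
  move=> x xQ; apply/negP => /andP [/b2P K1 /b2P K2].
  have := J_add K1 K2; rewrite (Q_sum Hpa) // => /(_ Ha) JA; exact: (JK_excl JA HKa).
have Hle := pair_le (gTK Ha) (@Q_g _ Ha Hpa) Hns.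
have Heq := pair_eq (gTK Ha) (@Q_g _ Ha Hpa) Hns.
have D := decompP Ha Hpa (K (word t)).
split.
  move=> HN [b [d [Hb Hd Ed]]].
  have HAB : #|[set x in QS Ha | Jb x]| = #|[set x in QS Ha | ~~ Jb x]|.
    move: F Hle; rewrite -HN -?subn1; lia.
  apply: (proj1 Heq HAB); have [x Hx] := proj1 D (ex_intro _ b (ex_intro _ d (And3 Hb Hd Ed))).
  by exists x; move: Hx; rewrite /Jb !b2_K ?ssvalP.
move=> Hno.
have HAB : #|[set x in QS Ha | Jb x]| = #|[set x in QS Ha | ~~ Jb x]|.
  apply/(proj2 Heq) => -[x Hx]; apply: Hno.
  have [b [d [Hb Hd Ed]]] : exists b d, [/\ pos b /\ K (word t) b, pos d /\ K (word t) d & a = b + d].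
    by apply/D; exists x; move: Hx; rewrite /Jb !b2_K ?ssvalP.
  by exists b, d.
move: F HAB Hle; rewrite -?subn1; lia.
Qed.

End Base.

Theorem mainTheorem14 (R : realFieldType) (n : nat)
    (Phi Delta : seq 'cV[R]_n)
    (HPhi : ADE_root_system Phi) (HDelta : is_base Phi Delta)
    (w : 'M[R]_n) (Hw : in_Weyl Phi w) :
  (forall alpha : 'cV[R]_n, inv_neg Phi Delta w alpha ->
     exists k : nat, is_length Delta w k /\
       (is_length Delta (refl alpha *m w) k.-1 <->
        ~ exists beta delta : 'cV[R]_n,
            [/\ inv_neg Phi Delta w beta, inv_neg Phi Delta w delta &
                alpha = beta + delta])) /\
  (forall alpha : 'cV[R]_n, inv_pos Phi Delta w alpha ->
     exists k : nat, is_length Delta w k /\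
       (is_length Delta (refl alpha *m w) k.+1 <->
        ~ exists beta delta : 'cV[R]_n,
            [/\ inv_pos Phi Delta w beta, inv_pos Phi Delta w delta &
                alpha = beta + delta])).
Proof.
case: HPhi => Hrs _ Hsl.
have [t ->] := Weyl_word Hrs HDelta Hw.
split => alpha [Hp HJ].
  exact: (part1 Hrs HDelta Hsl Hp HJ).
exact: (part2 Hrs HDelta Hsl Hp HJ).
Qed.
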